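(* (i) The variety of idempotent semirings satisfying $x+xyx\approx x$ equals $\mathbf{Rect}^{\bullet}\circ(\mathbf{LZ}^{+}\circ\mathbf{D})$. (ii) The variety of idempotent semirings satisfying $xyx+x\approx x$ equals $\mathbf{Rect}^{\bullet}\circ(\mathbf{RZ}^{+}\circ\mathbf{D})$.
   Context: An idempotent semiring is an algebra $(S,+,\cdot)$ with $(S,+)$, $(S,\cdot)$ bands and both distributive laws; addition not assumed commutative. $\mathbf{Rect}^{\bullet}$ is the variety of idempotent semirings satisfying $xyx\approx x$. $\mathbf{D}$ is the variety of distributive lattices (idempotent semirings satisfying $x+y\approx y+x$, $xy\approx yx$, $x+xy\approx x$); $\mathbf{LZ}^{+}$ (resp. $\mathbf{RZ}^{+}$) is the variety of idempotent semirings satisfying $x+y\approx x$ (resp. $x+y\approx y$). For classes $\mathbf{V},\mathbf{W}$ of idempotent semirings, the Mal'cev product $\mathbf{V}\circ\mathbf{W}$ is the class of idempotent semirings $S$ admitting a congruence $\rho$ with $S/\rho\in\mathbf{W}$ and every $\rho$-class (a subsemiring) belonging to $\mathbf{V}$. *)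

(* Defs.v *)
From Stdlib Require Import ProofIrrelevance.

(** Idempotent semirings: (S,+) and (S,.) are bands (associative and
    idempotent), both distributive laws hold; + is NOT assumed commutative. *)
Record ISR : Type := {
  car :> Type;
  sadd : car -> car -> car;
  smul : car -> car -> car;
  sadd_assoc : forall x y z, sadd x (sadd y z) = sadd (sadd x y) z;
  smul_assoc : forall x y z, smul x (smul y z) = smul (smul x y) z;
  sadd_idem : forall x, sadd x x = x;
  smul_idem : forall x, smul x x = x;
  smul_addr : forall x y z, smul x (sadd y z) = sadd (smul x y) (smul x z);
  smul_addl : forall x y z, smul (sadd x y) z = sadd (smul x z) (smul y z)
}.

Arguments sadd {i} _ _.
Arguments smul {i} _ _.

Definition ISRClass := ISR -> Prop.

Definition Rect_bullet : ISRClass :=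
  fun S => forall x y : S, smul (smul x y) x = x.
Definition Dlat : ISRClass :=
  fun S => (forall x y : S, sadd x y = sadd y x) /\
           (forall x y : S, smul x y = smul y x) /\
           (forall x y : S, sadd x (smul x y) = x).
Definition LZplus : ISRClass := fun S => forall x y : S, sadd x y = x.
Definition RZplus : ISRClass := fun S => forall x y : S, sadd x y = y.

Record is_congruence (S : ISR) (rho : S -> S -> Prop) : Prop := {
  cong_refl : forall x, rho x x;
  cong_sym : forall x y, rho x y -> rho y x;
  cong_trans : forall x y z, rho x y -> rho y z -> rho x z;
  cong_add : forall x y u v, rho x y -> rho u v -> rho (sadd x u) (sadd y v);
  cong_mul : forall x y u v, rho x y -> rho u v -> rho (smul x u) (smul y v)
}.

Definition is_hom (S T : ISR) (f : S -> T) : Prop :=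
  (forall x y : S, f (sadd x y) = sadd (f x) (f y)) /\
  (forall x y : S, f (smul x y) = smul (f x) (f y)).

(** "S/rho belongs to W": some member of W is the image of a surjective
    homomorphism from S whose kernel is exactly rho (i.e. is isomorphic to
    the quotient S/rho). *)
Definition quotient_in (W : ISRClass) (S : ISR) (rho : S -> S -> Prop) : Prop :=
  exists (T : ISR) (f : S -> T),
    W T /\ is_hom S T f /\ (forall t : T, exists x : S, f x = t) /\
    (forall x y : S, rho x y <-> f x = f y).

Section RhoClass.
Variables (S : ISR) (rho : S -> S -> Prop) (H : is_congruence S rho) (a : S).

Let C := {x : S | rho a x}.

Lemma rc_add_closed (x y : S) : rho a x -> rho a y -> rho a (sadd x y).
Proof. intros hx hy. rewrite <- (sadd_idem S a). now apply (cong_add S rho H). Qed.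

Lemma rc_mul_closed (x y : S) : rho a x -> rho a y -> rho a (smul x y).
Proof. intros hx hy. rewrite <- (smul_idem S a). now apply (cong_mul S rho H). Qed.

Definition rc_add (x y : C) : C :=
  exist _ (sadd (proj1_sig x) (proj1_sig y))
        (rc_add_closed _ _ (proj2_sig x) (proj2_sig y)).
Definition rc_mul (x y : C) : C :=
  exist _ (smul (proj1_sig x) (proj1_sig y))
        (rc_mul_closed _ _ (proj2_sig x) (proj2_sig y)).

Lemma rc_eq (x y : C) : proj1_sig x = proj1_sig y -> x = y.
Proof.
  destruct x as [x hx], y as [y hy]; simpl; intros E; subst y.
  f_equal; apply proof_irrelevance.
Qed.

Definition rho_class : ISR.
Proof.
  refine (@Build_ISR C rc_add rc_mul _ _ _ _ _ _);
    intros; apply rc_eq; simpl.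
  - apply sadd_assoc.
  - apply smul_assoc.
  - apply sadd_idem.
  - apply smul_idem.
  - apply smul_addr.
  - apply smul_addl.
Defined.
End RhoClass.

Definition malcev (V W : ISRClass) : ISRClass :=
  fun S => exists (rho : S -> S -> Prop) (H : is_congruence S rho),
    quotient_in W S rho /\ forall a : S, V (rho_class S rho H a).

(* Main.v *)
Require Import Defs.
From Stdlib Require Import ProofIrrelevance FunctionalExtensionality PropExtensionality ClassicalEpsilon.

Local Infix "⊕" := sadd (at level 50, left associativity).
Local Infix "⊗" := smul (at level 40, left associativity).
Ltac la := repeat rewrite smul_assoc.
Ltac sa := repeat rewrite sadd_assoc.

Definition mop (S : ISR) : ISR.
Proof.
  refine (@Build_ISR (car S) (@sadd S) (fun x y => @smul S y x) _ _ _ _ _ _); intros.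
  - apply sadd_assoc.
  - symmetry; apply smul_assoc.
  - apply sadd_idem.
  - apply smul_idem.
  - apply smul_addl.
  - apply smul_addr.
Defined.

Definition aop (S : ISR) : ISR.
Proof.
  refine (@Build_ISR (car S) (fun x y => @sadd S y x) (@smul S) _ _ _ _ _ _); intros.
  - symmetry; apply sadd_assoc.
  - apply smul_assoc.
  - apply sadd_idem.
  - apply smul_idem.
  - apply smul_addr.
  - apply smul_addl.
Defined.

Section Quot.
Variables (S : ISR) (r : S -> S -> Prop) (H : is_congruence S r).

Definition Qcar := {P : S -> Prop | exists x, P = r x}.
Definition qc (x : S) : Qcar := exist _ (r x) (ex_intro _ x eq_refl).
Definition rep (c : Qcar) : S :=
  proj1_sig (constructive_indefinite_description _ (proj2_sig c)).
Lemma rep_spec c : proj1_sig c = r (rep c).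
Proof. unfold rep. destruct (constructive_indefinite_description _ _). simpl. exact e. Qed.
Lemma Q_ext (a b : Qcar) : proj1_sig a = proj1_sig b -> a = b.
Proof. destruct a as [a ha], b as [b hb]; simpl; intro E; subst; f_equal; apply proof_irrelevance. Qed.
Lemma qc_rep c : qc (rep c) = c.
Proof. apply Q_ext. simpl. symmetry. apply rep_spec. Qed.
Lemma qc_eq x y : qc x = qc y <-> r x y.
Proof.
  split.
  - intro E. apply (f_equal (@proj1_sig _ _)) in E. simpl in E.
    rewrite E. apply (cong_refl S r H).
  - intro Hxy. apply Q_ext; simpl.
    apply functional_extensionality; intro z. apply propositional_extensionality.
    split; intro h.
    + apply (cong_trans S r H y x z); [apply (cong_sym S r H); exact Hxy | exact h].
    + apply (cong_trans S r H x y z); [exact Hxy | exact h].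
Qed.
Lemma rep_r x : r (rep (qc x)) x.
Proof.
  apply qc_eq. apply qc_rep.
Qed.

Definition qadd (a b : Qcar) : Qcar := qc (rep a ⊕ rep b).
Definition qmul (a b : Qcar) : Qcar := qc (rep a ⊗ rep b).
Lemma qadd_qc x y : qadd (qc x) (qc y) = qc (x ⊕ y).
Proof. apply qc_eq. apply (cong_add S r H); apply rep_r. Qed.
Lemma qmul_qc x y : qmul (qc x) (qc y) = qc (x ⊗ y).
Proof. apply qc_eq. apply (cong_mul S r H); apply rep_r. Qed.

Definition Quot : ISR.
Proof.
  refine (@Build_ISR Qcar qadd qmul _ _ _ _ _ _); intros;
  repeat match goal with a : Qcar |- _ => rewrite <- (qc_rep a); generalize (rep a); clear a; intro end;
  repeat rewrite ?qadd_qc, ?qmul_qc; f_equal.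
  - apply sadd_assoc.
  - apply smul_assoc.
  - apply sadd_idem.
  - apply smul_idem.
  - apply smul_addr.
  - apply smul_addl.
Defined.

Lemma quot_in_props :
  is_hom S Quot qc /\ (forall t : Quot, exists x : S, qc x = t) /\
  (forall x y : S, r x y <-> qc x = qc y).
Proof.
  split; [split|split].
  - intros x y. simpl. symmetry. apply qadd_qc.
  - intros x y. simpl. symmetry. apply qmul_qc.
  - intro t. exists (rep t). apply qc_rep.
  - intros x y. symmetry. apply qc_eq.
Qed.
End Quot.

Lemma quotient_in_of (W : ISRClass) (S : ISR) (r : S -> S -> Prop) (H : is_congruence S r) :
  W (Quot S r H) -> quotient_in W S r.
Proof.
  intro HW. exists (Quot S r H), (qc S r). split; [exact HW|]. apply quot_in_props.
Qed.

Lemma Qadd_qc (S : ISR) (r : S -> S -> Prop) (H : is_congruence S r) (x y : S) :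
  @sadd (Quot S r H) (qc S r x) (qc S r y) = qc S r (sadd x y).
Proof. exact (qadd_qc S r H x y). Qed.
Lemma Qmul_qc (S : ISR) (r : S -> S -> Prop) (H : is_congruence S r) (x y : S) :
  @smul (Quot S r H) (qc S r x) (qc S r y) = qc S r (smul x y).
Proof. exact (qmul_qc S r H x y). Qed.
Lemma Q_ind (S : ISR) (r : S -> S -> Prop) (H : is_congruence S r) (P : Quot S r H -> Prop) :
  (forall x, P (qc S r x)) -> forall a, P a.
Proof. intros h a. rewrite <- (qc_rep S r a). apply h. Qed.



Section Band.
Variable S : ISR.
Implicit Types a b c u v w x y z : S.

Lemma sq2 u v : u ⊗ v ⊗ v = u ⊗ v.
Proof. rewrite <- smul_assoc, smul_idem. reflexivity. Qed.

Lemma K0 u w v : u⊗w⊗v⊗w⊗(u⊗w⊗v) = u⊗w⊗v.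
Proof.
  transitivity (u⊗(w⊗u⊗w⊗v)⊗(w⊗u⊗w⊗v)).
  - la. rewrite <- (smul_idem _ (u ⊗ w)) at 1. la. reflexivity.
  - rewrite <- (smul_assoc _ u (w⊗u⊗w⊗v)), smul_idem. la.
    replace (u⊗w⊗u⊗w) with ((u⊗w)⊗(u⊗w)) by (la; reflexivity).
    rewrite smul_idem. reflexivity.
Qed.

Lemma le_trans a b w : a⊗b⊗a = a -> b⊗w⊗b = b -> a⊗w⊗a = a.
Proof.
  intros Ha Hb.
  assert (E : a = (a⊗b)⊗w⊗(b⊗a)).
  { transitivity (a⊗(b⊗w⊗b)⊗a). rewrite Hb; symmetry; exact Ha. la; reflexivity. }
  rewrite E. apply K0.
Qed.

Lemma le_mulr a b c : a⊗b⊗a = a -> (a⊗c)⊗(b⊗c)⊗(a⊗c) = a⊗c.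
Proof.
  intro Ha. set (X := a ⊗ c).
  assert (H1 : X⊗b⊗X = X).
  { pose proof (K0 a b X) as K. 
    assert (E : a⊗b⊗X = X) by (unfold X; la; rewrite Ha; reflexivity).
    rewrite E in K. exact K. }
  transitivity (X⊗X⊗b⊗c⊗(X⊗b⊗X)).
  { rewrite H1, smul_idem. la. reflexivity. }
  transitivity (a⊗(c⊗X⊗b)⊗(c⊗X⊗b)⊗X).
  { unfold X. la. reflexivity. }
  rewrite <- (smul_assoc _ a (c⊗X⊗b) (c⊗X⊗b)), smul_idem.
  transitivity (X⊗X⊗b⊗X). { unfold X. la. reflexivity. }
  rewrite smul_idem. exact H1.
Qed.

End Band.

Lemma le_mull (S : ISR) (a b c : S) : a⊗b⊗a = a -> (c⊗a)⊗(c⊗b)⊗(c⊗a) = c⊗a.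
Proof.
  intro Ha. pose proof (le_mulr (mop S) a b c) as L. simpl in L.
  assert (Ha' : a ⊗ (b ⊗ a) = a) by (rewrite smul_assoc; exact Ha).
  specialize (L Ha'). transitivity (c⊗a⊗(c⊗b⊗(c⊗a))); [la; reflexivity | exact L].
Qed.

Lemma le_comm (S : ISR) (x y : S) : (x⊗y)⊗(y⊗x)⊗(x⊗y) = x⊗y.
Proof. la. rewrite !sq2. rewrite <- (smul_assoc _ (x⊗y) x y). rewrite <- (smul_assoc _ x y (x ⊗ y)). 
  rewrite smul_assoc. rewrite smul_idem. reflexivity. Qed.


Definition HypI (S : ISR) := forall x y : S, x ⊕ x⊗y⊗x = x.

Lemma sq_row (S : ISR) (a b : S) : a ⊕ b = a ⊕ a⊗b ⊕ b⊗a ⊕ b.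
Proof.
  rewrite <- (smul_idem _ (a ⊕ b)) at 1. rewrite smul_addl, !smul_addr, !smul_idem. sa. reflexivity.
Qed.
Lemma sq_col (S : ISR) (a b : S) : a ⊕ b = a ⊕ b⊗a ⊕ a⊗b ⊕ b.
Proof.
  rewrite <- (smul_idem _ (a ⊕ b)) at 1. rewrite smul_addr, !smul_addl, !smul_idem. sa. reflexivity.
Qed.

Section SI.
Variable S : ISR.
Hypothesis HI : HypI S.
Implicit Types a b c p q u v w x y z : S.

Lemma Kl x y z : x⊗z ⊕ x⊗y⊗z = x⊗z.
Proof.
  pose proof (HI (z ⊕ x) (y ⊗ z)) as E1.
  apply (f_equal (fun t => x ⊗ t ⊗ z)) in E1.
  rewrite smul_addr, smul_addl in E1.
  assert (F : x⊗(z⊕x)⊗z = x⊗z).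
  { rewrite smul_addr, smul_addl, smul_idem, sq2, sadd_idem. reflexivity. }
  assert (G : x⊗((z⊕x)⊗(y⊗z)⊗(z⊕x))⊗z =
      ((x⊗z⊗(y⊗z))⊗z ⊕ (x⊗z⊗(y⊗z))⊗(x⊗z)) ⊕ ((x⊗(y⊗z))⊗z ⊕ (x⊗(y⊗z))⊗(x⊗z))).
  { transitivity ((x⊗(z⊕x))⊗(y⊗z)⊗((z⊕x)⊗z)); [la; reflexivity|].
    rewrite (smul_addr _ x z x), (smul_idem _ x), (smul_addl _ z x z), (smul_idem _ z).
    rewrite (smul_addl _ (x⊗z) x (y⊗z)).
    rewrite (smul_addl _ (x⊗z⊗(y⊗z)) (x⊗(y⊗z)) (z ⊕ x⊗z)).
    rewrite !smul_addr. reflexivity. }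
  rewrite F, G in E1. clear F G.
  assert (f1 : x⊗z ⊕ x⊗z⊗(y⊗z)⊗z = x⊗z).
  { transitivity (x⊗(z ⊕ z⊗y⊗z)); [|rewrite HI; reflexivity].
    rewrite smul_addr. f_equal. la. rewrite sq2. reflexivity. }
  assert (f2 : x⊗z ⊕ x⊗z⊗(y⊗z)⊗(x⊗z) = x⊗z) by apply HI.
  assert (f3 : x⊗(y⊗z)⊗z ⊕ x⊗(y⊗z)⊗(x⊗z) = x⊗y⊗z).
  { transitivity (x⊗(y⊗z)⊗(z ⊕ z⊗x⊗z)).
    - rewrite smul_addr. f_equal; la; rewrite ?sq2; reflexivity.
    - rewrite HI. la. apply sq2. }
  rewrite !sadd_assoc in E1. rewrite f1, f2 in E1. rewrite <- sadd_assoc, f3 in E1. exact E1.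
Qed.
Lemma RR p q z : p⊗q = q -> q⊗p = p -> (q ⊕ z)⊗(p ⊕ z) = p ⊕ z.
Proof.
  intros Hpq Hqp.
  assert (E : q⊗(p⊕z) = p⊗(p⊕z)).
  { transitivity (p⊗(p⊕z) ⊕ p⊗(q⊗z)⊗(p⊕z)); [|apply Kl].
    rewrite (sq_row S p z) at 1. rewrite !smul_addr. rewrite smul_idem. la.
    rewrite Hpq, Hqp, !sq2. sa. reflexivity. }
  rewrite smul_addl, E, <- smul_addl, smul_idem. reflexivity.
Qed.
End SI.

Lemma HI_mop (S : ISR) : HypI S -> HypI (mop S).
Proof. intros H x y. simpl. rewrite smul_assoc. apply H. Qed.

Lemma Kr (S : ISR) (H : HypI S) (x y z : S) : z⊗x ⊕ z⊗y⊗x = z⊗x.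
Proof. pose proof (Kl (mop S) (HI_mop S H) x y z) as K. simpl in K. rewrite smul_assoc in K. exact K. Qed.

Lemma LL (S : ISR) (H : HypI S) (p q z : S) : p⊗q = p -> q⊗p = q -> (p ⊕ z)⊗(q ⊕ z) = p ⊕ z.
Proof. intros H1 H2. pose proof (RR (mop S) (HI_mop S H) p q z) as K. simpl in K. exact (K H2 H1). Qed.

Lemma Dright (S : ISR) (H : HypI S) (x y z : S) :
  x⊗y⊗x = x -> y⊗x⊗y = y -> (x⊕z)⊗(y⊕z)⊗(x⊕z) = x ⊕ z.
Proof.
  intros Hxy Hyx.
  assert (A : (x⊗y ⊕ z)⊗(x⊕z) = x⊕z).
  { apply RR; auto. rewrite smul_assoc, smul_idem. reflexivity. }
  assert (B : (x⊗y ⊕ z)⊗(y⊕z) = x⊗y ⊕ z).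
  { apply LL; auto. apply sq2. rewrite smul_assoc. exact Hyx. }
  set (u := x ⊕ z) in *. set (v := y ⊕ z) in *. set (u' := x⊗y ⊕ z) in *.
  assert (E : u = u'⊗v⊗u) by (rewrite B; symmetry; exact A).
  rewrite E at 1. rewrite <- (smul_assoc _ (u'⊗v⊗u) v u).
  rewrite <- (smul_assoc _ (u'⊗v) u (v⊗u)). rewrite <- (smul_assoc _ u' v (u ⊗ (v⊗u))).
  rewrite (smul_assoc _ v u (v⊗u)), (smul_assoc _ (v⊗u) v u). 
  rewrite <- (smul_assoc _ (v⊗u) v u), smul_idem. rewrite smul_assoc. symmetry. exact E.
Qed.

Lemma Dleft (S : ISR) (H : HypI S) (x y z : S) :
  x⊗y⊗x = x -> (z⊕x)⊗(z⊕y)⊗(z⊕x) = z ⊕ x.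
Proof.
  intro Hxy.
  rewrite (smul_addr _ ((z⊕x)⊗(z⊕y)) z x).
  rewrite <- (smul_assoc _ (z⊕x) (z⊕y) z), <- (smul_assoc _ (z⊕x) (z⊕y) x).
  rewrite (smul_addl _ z y z), (smul_addl _ z y x), smul_idem.
  rewrite (smul_addl _ z x (z ⊕ y⊗z)), (smul_addl _ z x (z⊗x ⊕ y⊗x)), !smul_addr.
  la. rewrite !smul_idem, Hxy.
  rewrite H, Kl, Kr by exact H.
  assert (P2 : z⊗x ⊕ (x⊗z⊗x ⊕ x) = z⊗x ⊕ x).
  { rewrite (sq_row S (z⊗x) x). rewrite sq2, sadd_idem. la. sa. reflexivity. }
  rewrite P2. rewrite (sq_col S z x). sa. reflexivity.
Qed.



Definition HypII (S : ISR) := forall x y : S, x⊗y⊗x ⊕ x = x.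

Lemma back_i (S : ISR) : malcev Rect_bullet (malcev LZplus Dlat) S -> HypI S.
Proof.
  intros [rho [H [[T [f [HT [[Hfa Hfm] [Hsurj Hker]]]]] HR]]].
  destruct HT as [sg [Hs [[U [g [[Uc [Um Ua]] [[Hga Hgm] [Hgs Hgk]]]]] HL]]].
  assert (HIT : forall a b : T, a ⊕ a⊗b⊗a = a).
  { intros a b.
    assert (Hac : sg a (a ⊕ a⊗b⊗a)).
    { apply Hgk. rewrite Hga, !Hgm. rewrite (Um (g a ⊗ g b) (g a)). la. rewrite smul_idem.
      symmetry. apply Ua. }
    pose proof (HL a (exist _ a (cong_refl T sg Hs a)) (exist _ _ Hac)) as E.
    apply (f_equal (@proj1_sig _ _)) in E. simpl in E.
    rewrite sadd_assoc, sadd_idem in E. exact E. }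
  intros x y.
  assert (Hxw : rho x (x ⊕ x⊗y⊗x)).
  { apply Hker. rewrite Hfa, !Hfm. symmetry. apply HIT. }
  pose proof (HR x (exist _ x (cong_refl S rho H x)) (exist _ _ Hxw)) as E.
  apply (f_equal (@proj1_sig _ _)) in E. simpl in E.
  transitivity (x⊗(x ⊕ x⊗y⊗x)⊗x); [|exact E].
  rewrite smul_addr, smul_addl. la. repeat rewrite ?smul_idem, ?sq2. reflexivity.
Qed.

Lemma back_ii (S : ISR) : malcev Rect_bullet (malcev RZplus Dlat) S -> HypII S.
Proof.
  intros [rho [H [[T [f [HT [[Hfa Hfm] [Hsurj Hker]]]]] HR]]].
  destruct HT as [sg [Hs [[U [g [[Uc [Um Ua]] [[Hga Hgm] [Hgs Hgk]]]]] HL]]].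
  assert (HIT : forall a b : T, a⊗b⊗a ⊕ a = a).
  { intros a b.
    assert (Hac : sg a (a⊗b⊗a ⊕ a)).
    { apply Hgk. rewrite Hga, !Hgm. rewrite (Um (g a ⊗ g b) (g a)). la. rewrite smul_idem.
      rewrite Uc. symmetry. apply Ua. }
    pose proof (HL a (exist _ _ Hac) (exist _ a (cong_refl T sg Hs a))) as E.
    apply (f_equal (@proj1_sig _ _)) in E. simpl in E.
    rewrite <- sadd_assoc, sadd_idem in E. exact E. }
  intros x y.
  assert (Hxw : rho x (x⊗y⊗x ⊕ x)).
  { apply Hker. rewrite Hfa, !Hfm. symmetry. apply HIT. }
  pose proof (HR x (exist _ x (cong_refl S rho H x)) (exist _ _ Hxw)) as E.
  apply (f_equal (@proj1_sig _ _)) in E. simpl in E.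
  transitivity (x⊗(x⊗y⊗x ⊕ x)⊗x); [|exact E].
  rewrite smul_addr, smul_addl. la. repeat rewrite ?smul_idem, ?sq2. reflexivity.
Qed.

Definition Dr (S : ISR) (x y : S) : Prop := x⊗y⊗x = x /\ y⊗x⊗y = y.

Lemma Dr_trans (S : ISR) (x y z : S) : Dr S x y -> Dr S y z -> Dr S x z.
Proof.
  intros [h1 h2] [h3 h4]. split.
  - exact (le_trans S x y z h1 h3).
  - exact (le_trans S z y x h4 h2).
Qed.

Lemma Dr_cong_mul (S : ISR) (x y u v : S) : Dr S x y -> Dr S u v -> Dr S (x⊗u) (y⊗v).
Proof.
  intros [h1 h2] [h3 h4]. apply Dr_trans with (y ⊗ u).
  - split; apply le_mulr; assumption.
  - split; apply le_mull; assumption.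
Qed.

Lemma Dr_cong (S : ISR) (H : HypI S) : is_congruence S (Dr S).
Proof.
  constructor.
  - intro x. split; rewrite !smul_idem; reflexivity.
  - intros x y [h1 h2]. split; assumption.
  - intros x y z. apply Dr_trans.
  - intros x y u v [h1 h2] [h3 h4]. apply Dr_trans with (y ⊕ u).
    + split; apply Dright; assumption.
    + split; apply Dleft; assumption.
  - intros. apply Dr_cong_mul; assumption.
Qed.

Lemma HI_aop (S : ISR) : HypII S -> HypI (aop S).
Proof. intros H x y. simpl. apply H. Qed.

Lemma Dr_cong2 (S : ISR) (H : HypII S) : is_congruence S (Dr S).
Proof.
  pose proof (Dr_cong (aop S) (HI_aop S H)) as C. destruct C as [c1 c2 c3 c4 c5].
  constructor; auto.
  intros x y u v h1 h2. exact (c4 u v x y h2 h1).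
Qed.

Lemma Rect_D (S : ISR) (H : is_congruence S (Dr S)) (a : S) : Rect_bullet (rho_class S (Dr S) H a).
Proof.
  intros [u hu] [v hv]. apply rc_eq. simpl.
  assert (Duv : Dr S u v) by (apply Dr_trans with a; [destruct hu; split; assumption | exact hv]).
  apply Duv.
Qed.


Section QD.
Variables (S : ISR) (Hc : is_congruence S (Dr S)).
Local Notation T := (Quot S (Dr S) Hc).

Lemma QD_comm (a b : T) : a ⊗ b = b ⊗ a.
Proof.
  revert a. apply Q_ind. intro x. revert b. apply Q_ind. intro y.
  rewrite !Qmul_qc. apply qc_eq; [exact Hc|]. split; apply le_comm.
Qed.

Lemma QD_I : HypI S -> forall a b : T, a ⊕ a ⊗ b = a.
Proof.
  intros HI a b.
  assert (HT : forall a b : T, a ⊕ a ⊗ b ⊗ a = a).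
  { intros a0 b0. revert a0. apply Q_ind. intro x. revert b0. apply Q_ind. intro y. rewrite !Qmul_qc, Qadd_qc. f_equal. apply HI. }
  transitivity (a ⊕ a⊗b⊗a); [f_equal | apply HT].
  symmetry. rewrite <- smul_assoc, (QD_comm b a). la. rewrite smul_idem. reflexivity.
Qed.

Lemma QD_II : HypII S -> forall a b : T, a ⊗ b ⊕ a = a.
Proof.
  intros HI a b.
  assert (HT : forall a b : T, a ⊗ b ⊗ a ⊕ a = a).
  { intros a0 b0. revert a0. apply Q_ind. intro x. revert b0. apply Q_ind. intro y. rewrite !Qmul_qc, Qadd_qc. f_equal. apply HI. }
  transitivity (a⊗b⊗a ⊕ a); [f_equal | apply HT].
  symmetry. rewrite <- smul_assoc, (QD_comm b a). la. rewrite smul_idem. reflexivity.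
Qed.
End QD.

Section Second.
Variable T : ISR.
Hypothesis Tc : forall a b : T, a ⊗ b = b ⊗ a.
Hypothesis Ta : forall a b : T, a ⊕ a ⊗ b = a.

Definition sg (a b : T) : Prop := a ⊕ b = a /\ b ⊕ a = b.

Lemma LR (a b : T) : a ⊕ b ⊕ a = a ⊕ b.
Proof.
  pose proof (Ta (a ⊕ b) a) as E. rewrite smul_addl, smul_idem, (Tc b a), Ta in E. exact E.
Qed.

Lemma sg_trans (a b c : T) : sg a b -> sg b c -> sg a c.
Proof.
  intros [h1 h2] [h3 h4]. split.
  - rewrite <- h1 at 1. rewrite <- sadd_assoc, h3. exact h1.
  - rewrite <- h4 at 1. rewrite <- sadd_assoc, h2. exact h4.
Qed.

Lemma sg_addr (x y u : T) : sg x y -> sg (x ⊕ u) (y ⊕ u).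
Proof.
  assert (G : forall x y, x ⊕ y = x -> x ⊕ u ⊕ (y ⊕ u) = x ⊕ u).
  { intros a b h.
    transitivity (a ⊕ (u ⊕ b ⊕ u)); [sa; reflexivity|]. rewrite LR.
    rewrite <- h at 1.
    transitivity (a ⊕ (b ⊕ u ⊕ b)); [sa; reflexivity|].
    rewrite LR. sa. rewrite h. reflexivity. }
  intros [h1 h2]. split; apply G; assumption.
Qed.

Lemma sg_addl (y u v : T) : sg u v -> sg (y ⊕ u) (y ⊕ v).
Proof.
  assert (G : forall u v, u ⊕ v = u -> y ⊕ u ⊕ (y ⊕ v) = y ⊕ u).
  { intros a b h. sa. rewrite LR. rewrite <- sadd_assoc, h. reflexivity. }
  intros [h1 h2]. split; apply G; assumption.
Qed.

Lemma sg_cong : is_congruence T sg.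
Proof.
  constructor.
  - intro x. split; apply sadd_idem.
  - intros x y [h1 h2]. split; assumption.
  - intros x y z. apply sg_trans.
  - intros x y u v h1 h2. apply sg_trans with (y ⊕ u). apply sg_addr; exact h1. apply sg_addl; exact h2.
  - intros x y u v [h1 h2] [h3 h4]. apply sg_trans with (y ⊗ u).
    + split; rewrite <- smul_addl; [rewrite h1 | rewrite h2]; reflexivity.
    + split; rewrite <- smul_addr; [rewrite h3 | rewrite h4]; reflexivity.
Qed.

Lemma second_LZ : malcev LZplus Dlat T.
Proof.
  exists sg, sg_cong. split.
  - apply (quotient_in_of Dlat T sg sg_cong). split; [|split].
    + intros a0 b0. revert a0. apply Q_ind. intro x. revert b0. apply Q_ind. intro y.
      rewrite !Qadd_qc. apply qc_eq; [exact sg_cong|]. split.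
      * sa. rewrite <- (sadd_assoc _ x y y), sadd_idem. apply LR.
      * sa. rewrite <- (sadd_assoc _ y x x), sadd_idem. apply LR.
    + intros a0 b0. revert a0. apply Q_ind. intro x. revert b0. apply Q_ind. intro y.
      rewrite !Qmul_qc. rewrite Tc. reflexivity.
    + intros a0 b0. revert a0. apply Q_ind. intro x. revert b0. apply Q_ind. intro y.
      rewrite Qmul_qc, Qadd_qc. rewrite Ta. reflexivity.
  - intros a [u hu] [v hv]. apply rc_eq. simpl.
    assert (h : sg u v) by (apply sg_trans with a; [destruct hu; split; assumption | exact hv]).
    apply h.
Qed.
End Second.

Lemma second_RZ (T : ISR) (Tc : forall a b : T, a ⊗ b = b ⊗ a)
  (Ta : forall a b : T, a ⊗ b ⊕ a = a) : malcev RZplus Dlat T.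
Proof.
  assert (Tc' : forall a b : aop T, a ⊗ b = b ⊗ a) by exact Tc.
  assert (Ta' : forall a b : aop T, a ⊕ a ⊗ b = a) by exact Ta.
  destruct (second_LZ (aop T) Tc' Ta') as [rho [H [[U [g [[Uc [Um Ua]] [[Hga Hgm] [Hgs Hgk]]]]] HL]]].
  assert (H' : is_congruence T rho).
  { destruct H as [c1 c2 c3 c4 c5]. constructor; auto.
    intros x y u v h1 h2. exact (c4 u v x y h2 h1). }
  exists rho, H'. split.
  - exists (aop U), g. split; [|split; [split|split]].
    + split; [|split]; intros x y; simpl.
      * apply Uc.
      * apply Um.
      * rewrite Uc. apply Ua.
    + intros x y. simpl. exact (Hga y x).
    + intros x y. exact (Hgm x y).
    + exact Hgs.
    + exact Hgk.
  - intros a [u hu] [v hv]. apply rc_eq. simpl.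
    pose proof (HL a (exist _ v hv) (exist _ u hu)) as E.
    apply (f_equal (@proj1_sig _ _)) in E. simpl in E. exact E.
Qed.

Theorem theorem4p3 :
  (forall S : ISR,
     (forall x y : S, sadd x (smul (smul x y) x) = x) <->
     malcev Rect_bullet (malcev LZplus Dlat) S) /\
  (forall S : ISR,
     (forall x y : S, sadd (smul (smul x y) x) x = x) <->
     malcev Rect_bullet (malcev RZplus Dlat) S).
Proof.
  split; intro S; split.
  - intro HI. exists (Dr S), (Dr_cong S HI). split.
    + apply (quotient_in_of _ S (Dr S) (Dr_cong S HI)). apply second_LZ.
      * apply QD_comm.
      * apply QD_I. exact HI.
    + apply Rect_D.
  - apply back_i.
  - intro HI. exists (Dr S), (Dr_cong2 S HI). split.
    + apply (quotient_in_of _ S (Dr S) (Dr_cong2 S HI)). apply second_RZ.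
      * apply QD_comm.
      * apply QD_II. exact HI.
    + apply Rect_D.
  - apply back_ii.
Qed.
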